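(* Let $e_1,\dots,e_n>0$ with $\sum_ie_i=1$, let $d\in\mathbb{R}_+^n$ be reported demands and $a$ the MMF allocation, and suppose $a_i<d_i$ for some agent $i$. Then, keeping all other agents' reported demands fixed, agent $i$'s MMF allocation is the same value $a_i$ for every report $d_i'\ge a_i$.
   Context: MMF$(e,d)$: set $r=1$, $E=1$, $S=\{1,\dots,n\}$, $a=0$; process agents $j$ in ascending order of $d_j/e_j$; if $d_j<re_j/E$, set $a_j=d_j$, remove $j$ from $S$, $r\leftarrow r-d_j$, $E\leftarrow E-e_j$ and continue; otherwise set $a_k=re_k/E$ for all $k\in S$ and stop; output $a$. *)

(* Defs.v *)
From mathcomp Require Import all_boot all_order all_algebra.
Set Implicit Arguments. Unset Strict Implicit. Unset Printing Implicit Defensive.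
Import Order.TTheory GRing.Theory Num.Theory.
Local Open Scope ring_scope.

Section MMF.
Variables (R : realFieldType) (n : nat) (e d : 'I_n -> R).

(* Processing order: ascending d_j / e_j; ties broken by agent index
   (mathcomp's [sort] is stable and [enum 'I_n] is increasing). *)
Definition mmf_order : seq 'I_n :=
  sort (fun i j => d i / e i <= d j / e j) (enum 'I_n).

(* [s] = agents still to be processed = the current set S (in processing
   order); r = remaining resource; E = remaining endowment mass; a = current
   allocation. *)
Fixpoint mmf_aux (s : seq 'I_n) (r E : R) (a : 'I_n -> R) : 'I_n -> R :=
  match s with
  | [::] => a
  | j :: s' =>
      if d j < r * e j / E then
        mmf_aux s' (r - d j) (E - e j) (fun k => if k == j then d j else a k)
      else fun k => if k \in s then r * e k / E else a k
  end.

Definition MMF : 'I_n -> R := mmf_aux mmf_order 1 1 (fun _ => 0).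
End MMF.

(* Main.v *)
Require Import Defs.
From mathcomp Require Import all_boot all_order all_algebra.
From mathcomp Require Import ring lra.
From Stdlib Require Import FunctionalExtensionality.
Import Order.TTheory GRing.Theory Num.Theory.
Local Open Scope ring_scope.

Lemma eq_in_sort_aux (T : eqType) (P : {pred T}) (leT leT' : rel T) (s : seq T) :
  all P s -> {in P &, forall x y, leT x y = leT' x y} -> sort leT s = sort leT' s.
Proof.
move=> /all_sigP[t ->] H; rewrite !sort_map; congr map; congr sort.
apply: functional_extensionality => x; apply: functional_extensionality => y.
exact: H (valP x) (valP y).
Qed.

Section Proofs.
Variables (R : realFieldType) (n : nat) (e : 'I_n -> R).
Hypothesis he_pos : forall j, 0 < e j.

Lemma notin_aux d s r E a k : k \notin s -> mmf_aux e d s r E a k = a k.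
Proof.
elim: s r E a => [|j s IH] r E a //=.
rewrite in_cons negb_or => /andP[kj ks].
case: ifP => _; first by rewrite IH // (negbTE kj).
by rewrite in_cons (negbTE kj) (negbTE ks).
Qed.

Lemma sum_pos {s k} : k \in s -> e k <= \sum_(x <- s) e x.
Proof.
move=> ks; rewrite (big_rem k ks) /= lerDl sumr_ge0 // => x _; exact: ltW.
Qed.

Lemma keyE x r E k : 0 < E -> (x < r * e k / E) = (x / e k < r / E).
Proof. move=> E0; by rewrite mulrAC ltr_pdivrMr. Qed.

Lemma keyE' x r E k : 0 < E -> (r * e k / E <= x) = (r / E <= x / e k).
Proof. move=> E0; by rewrite mulrAC ler_pdivlMr. Qed.

Lemma levelB {d s r E a k} : uniq s -> k \in s -> E = \sum_(x <- s) e x ->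
  mmf_aux e d s r E a k < d k -> r * e k / E <= mmf_aux e d s r E a k.
Proof.
elim: s r E a => [|j s IH] r E a //= /andP[js us] ks HE.
have E0 : 0 < E.
  by rewrite HE; apply: lt_le_trans (he_pos k) (sum_pos ks).
case: ifP => hsat; last by rewrite ks.
move=> hu.
have kj : k != j.
  apply/negP => /eqP kj; subst k.
  by move: hu; rewrite notin_aux //= eqxx ltxx.
have ks' : k \in s by move: ks; rewrite in_cons (negbTE kj).
have HE' : E - e j = \sum_(x <- s) e x by rewrite HE big_cons; ring.
apply: le_trans (IH _ _ _ us ks' HE' hu).
have E'0 : 0 < E - e j by rewrite HE'; apply: lt_le_trans (he_pos k) (sum_pos ks').
move: hsat; rewrite ltr_pdivlMr // => hsat.
rewrite keyE' // mulrAC mulfK; last by apply: lt0r_neq0.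
rewrite ler_pdivrMr // mulrAC ler_pdivlMr //.
nra.
Qed.

Variables (d d' : 'I_n -> R) (i : 'I_n).
Hypothesis hd' : forall j, j != i -> d' j = d j.

Lemma mainC s s' r E a :
  uniq s -> i \in s -> i \in s' ->
  sorted (fun x y => d x / e x <= d y / e y) s ->
  sorted (fun x y => d' x / e x <= d' y / e y) s' ->
  filter (predC1 i) s = filter (predC1 i) s' ->
  E = \sum_(x <- s) e x ->
  mmf_aux e d s r E a i < d i -> mmf_aux e d s r E a i <= d' i ->
  mmf_aux e d' s' r E a i = mmf_aux e d s r E a i.
Proof.
elim: s s' r E a => [|j s IH] s' r E a //.
move=> us0 is_ is' srt srt' hf HE hu hle.
have hlev' := le_trans (levelB us0 is_ HE hu) hle.
move: us0 hu hle hlev' => /= /andP[js us].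
have E0 : 0 < E by rewrite HE; apply: lt_le_trans (he_pos i) (sum_pos is_).
case: s' is' srt' hf => [|h t] //= is' srt' hf.
case: ifP => hsat hu hle hlev'.
- have ji : j != i.
    apply/negP => /eqP ji; subst j.
    by move: hu; rewrite notin_aux //= eqxx ltxx.
  rewrite ji in hf.
  have ltr : transitive (fun x y : 'I_n => d' x / e x <= d' y / e y).
    by move=> x y z; exact: le_trans.
  case: (eqVneq h i) => hi.
    subst h; move: hf; rewrite eqxx /= => hf.
    have : j \in t.
      by have := mem_head j (filter (predC1 i) s); rewrite hf mem_filter => /andP[].
    move=> /(allP (order_path_min ltr srt')) /=.
    rewrite (hd' _ ji) => hij.
    move: hsat; rewrite keyE // => hsat.
    move: hlev'; rewrite keyE' // => hlev'.
    have := lt_le_trans (le_lt_trans hij hsat) hlev'.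
    by rewrite ltxx.
  move: hf; rewrite hi => -[hh hf]; subst h.
  rewrite (hd' _ ji) hsat.
  have HE' : E - e j = \sum_(x <- s) e x by rewrite HE big_cons; ring.
  apply: IH => //.
  - by move: is_; rewrite in_cons eq_sym (negbTE ji).
  - by move: is'; rewrite in_cons eq_sym (negbTE ji).
  - exact: path_sorted srt.
  - exact: path_sorted srt'.
- rewrite /= is_.
  have ltr : transitive (fun x y : 'I_n => d x / e x <= d y / e y).
    by move=> x y z; exact: le_trans.
  have hnot : ~~ (d' h < r * e h / E).
    case: (eqVneq h i) => hi.
      by subst h; rewrite -leNgt.
    have hh : d j / e j <= d h / e h.
      case: (eqVneq j i) => ji.
        subst j; move: hf; rewrite eqxx hi /= => hf.
        have : h \in s.
          by have := mem_head h (filter (predC1 i) t); rewrite -hf mem_filter => /andP[].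
        by move=> /(allP (order_path_min ltr srt)).
      by move: hf; rewrite ji hi => -[->].
    rewrite (hd' _ hi) -leNgt keyE' //.
    move: hsat; rewrite keyE // => /negbT; rewrite -leNgt => hsat'.
    exact: le_trans hsat' hh.
  by rewrite (negbTE hnot) /= is'.
Qed.

End Proofs.

Theorem mainTheorem15 (R : realFieldType) (n : nat) (e d : 'I_n -> R) (i : 'I_n)
  (he_pos : forall j, 0 < e j) (he_sum : \sum_(j < n) e j = 1)
  (hd_nonneg : forall j, 0 <= d j)
  (hunsat : MMF e d i < d i) :
  forall d' : 'I_n -> R,
    (forall j, j != i -> d' j = d j) ->
    MMF e d i <= d' i ->
    MMF e d' i = MMF e d i.
Proof.
move=> d' hd' hle.
move: hunsat hle; rewrite /MMF /mmf_order => hu hle.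
have tot : forall f : 'I_n -> R, total (fun x y : 'I_n => f x / e x <= f y / e y).
  by move=> f x y; exact: le_total.
have tr : forall f : 'I_n -> R, transitive (fun x y : 'I_n => f x / e x <= f y / e y).
  by move=> f x y z; exact: le_trans.
apply: (mainC _ _ _ he_pos _ _ _ hd') => //.
- by rewrite sort_uniq enum_uniq.
- by rewrite mem_sort mem_enum.
- by rewrite mem_sort mem_enum.
- exact: sort_sorted.
- exact: sort_sorted.
- rewrite !filter_sort //.
  apply: (@eq_in_sort_aux _ (predC1 i)); first exact: filter_all.
  by move=> x y hx hy /=; rewrite !hd'.
- rewrite -he_sum; apply/esym/perm_big; rewrite perm_sort. by rewrite enumT.

Qed.
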